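(* Let $n\geqslant 2$, $\varepsilon \in [0,1]$, $p \geqslant 2$ an integer, and $\bm x \in \mathcal Y(\varepsilon,p)$. Define $\mu = 1/n$ and the coefficient of variation $\mathrm{CV}(\bm x) = \sqrt{\frac1n \sum_{i=1}^n (x_i-\mu)^2}\,/\,\mu$. Then $$(\mathrm{CV}(\bm x))^2 \leqslant B_p(\varepsilon) := \frac{(D_p+1)^2}{(1+\varepsilon D_p)^2} - 1.$$ Moreover, $B_p(\varepsilon)$ is strictly decreasing in $\varepsilon$ on $[0,1]$, with $B_p(0) = (D_p+1)^2 - 1$ and $B_p(1) = 0$.
   Context: For $\bm x \in \mathbb{R}^n_{\geqslant 0}$ and $p\geqslant 1$, $\|\bm x\|_p = (\sum_{i=1}^n x_i^p)^{1/p}$. Define $D_p = n^{1-1/p}-1$. Let $\Delta_n = \{\bm x \in \mathbb{R}^n_{\geqslant 0} : \sum_{i=1}^n x_i = 1\}$ be the probability simplex, and for $\varepsilon\in[0,1]$ and integer $p\geqslant 2$ let $\mathcal Y(\varepsilon,p) = \{\bm x \in \Delta_n : (1+\varepsilon D_p)\|\bm x\|_p \leqslant 1\}$. *)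

(* Defs.v *)
From mathcomp Require Import all_boot all_order all_algebra.
From mathcomp Require Import reals exp.
Set Implicit Arguments. Unset Strict Implicit. Unset Printing Implicit Defensive.
Import Order.TTheory GRing.Theory Num.Theory.
Local Open Scope ring_scope.

Definition pnorm (R : realType) (n p : nat) (x : 'I_n -> R) : R :=
  (\sum_(i < n) x i ^+ p) `^ (p%:R^-1).

Definition Dp (R : realType) (n p : nat) : R :=
  (n%:R) `^ (1 - p%:R^-1) - 1.

Definition in_simplex (R : realType) (n : nat) (x : 'I_n -> R) : Prop :=
  (forall i, 0 <= x i) /\ \sum_(i < n) x i = 1.

Definition in_Y (R : realType) (n : nat) (eps : R) (p : nat) (x : 'I_n -> R) : Prop :=
  in_simplex x /\ (1 + eps * Dp R n p) * pnorm p x <= 1.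

Definition CV (R : realType) (n : nat) (x : 'I_n -> R) : R :=
  let mu := (n%:R)^-1 in
  Num.sqrt ((n%:R)^-1 * \sum_(i < n) (x i - mu) ^+ 2) / mu.

Definition Bp (R : realType) (n p : nat) (eps : R) : R :=
  (Dp R n p + 1) ^+ 2 / (1 + eps * Dp R n p) ^+ 2 - 1.

(* Main.v *)
Require Import Defs.
From mathcomp Require Import all_boot all_order all_algebra.
From mathcomp Require Import reals exp.
Import Order.TTheory GRing.Theory Num.Theory.
Local Open Scope ring_scope.
From mathcomp Require Import ring lra.
Lemma young (R : realType) (k : nat) (t : R) : 0 <= t ->
  (k.+2)%:R * t ^+ 2 <= 2 * t ^+ k.+2 + k%:R.
Proof.
move=> t0; elim: k => [|k IH]; first by rewrite mulr2n mulrDl mul1r; lra.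
have [t1|t1] := lerP t 1.
  have u1 : t ^+ k.+2 <= 1 by rewrite exprn_ile1.
  have ut : t ^+ k.+2 <= t.
    rewrite exprS; rewrite -[X in _ <= X]mulr1; apply: ler_wpM2l => //.
    by rewrite exprn_ile1.
  have u0 : 0 <= t ^+ k.+2 by rewrite exprn_ge0.
  rewrite (exprS t k.+2) -!natr1 in IH *; nra.
have t1' : 1 <= t by lra.
have u1 : 1 <= t ^+ k.+2 by rewrite exprn_ege1.
have ut : t <= t ^+ k.+2.
  rewrite exprS; rewrite -[X in X <= _]mulr1; apply: ler_wpM2l => //.
  by rewrite exprn_ege1.
rewrite (exprS t k.+2) -!natr1 in IH *; nra.
Qed.

Lemma sumsq (R : realType) (n : nat) (x : 'I_n -> R) (M : R) (k : nat) :
  0 < M -> (forall i, 0 <= x i) ->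
  \sum_(i < n) x i ^+ 2 <= M ^+ 2 / (k.+2)%:R *
    (2 * (\sum_(i < n) x i ^+ k.+2) / M ^+ k.+2 + n%:R * k%:R).
Proof.
move=> M0 x0.
have pk : 0 < (k.+2)%:R :> R by rewrite ltr0n.
have -> : M ^+ 2 / (k.+2)%:R *
    (2 * (\sum_(i < n) x i ^+ k.+2) / M ^+ k.+2 + n%:R * k%:R) =
   \sum_(i < n) M ^+ 2 / (k.+2)%:R * (2 * (x i / M) ^+ k.+2 + k%:R).
  rewrite -mulr_sumr big_split /= sumr_const card_ord -mulr_sumr.
  rewrite -mulr_natl; congr (_ * (_ + _)).
  rewrite -mulrA; congr (_ * _); rewrite mulr_suml; apply: eq_bigr => i _.
  by rewrite expr_div_n.
  by rewrite mulr_natl.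
apply: ler_sum => i _.
have t0 : 0 <= x i / M by rewrite divr_ge0 // ltW.
have := @young R k _ t0.
move=> H.
have -> : x i ^+ 2 = M ^+ 2 / (k.+2)%:R * ((k.+2)%:R * (x i / M) ^+ 2).
  rewrite expr_div_n; field; rewrite gt_eqF //=.
  by rewrite -(natrD R 2 k) pnatr_eq0.
apply: ler_wpM2l => //.
by rewrite divr_ge0 ?exprn_ge0 // ltW.
Qed.

Theorem proposition2 (R : realType) (n p : nat) (eps : R) (x : 'I_n -> R) :
  (2 <= n)%N -> 0 <= eps <= 1 -> (2 <= p)%N -> in_Y eps p x ->
  CV x ^+ 2 <= Bp n p eps /\
  (forall e1 e2 : R, 0 <= e1 -> e1 < e2 -> e2 <= 1 -> Bp n p e2 < Bp n p e1) /\
  Bp n p (0 : R) = (Dp R n p + 1) ^+ 2 - 1 /\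
  Bp n p (1 : R) = 0.
Proof.
case: p => [|[|k]] // n2 /andP[e0 e1] _ [[x0 sx] hY].
set p := k.+2.
set N : R := n%:R.
have N0 : 0 < N by rewrite /N ltr0n; case: n n2 {x x0 sx hY N} => // ?.
set c : R := N `^ (1 - p%:R^-1).
have Dc : Dp R n p = c - 1 by [].
have p0 : 0 < p%:R :> R by rewrite ltr0n; by [].
have c1 : 1 < c.
  have r0 : 0 < 1 - p%:R^-1 :> R.
    rewrite subr_gt0 invf_lt1 // ltr1n; by [].
  have N1 : 1 < N by rewrite /N ltr1n.
  have := gt0_ltr_powR r0 _ _ N1; rewrite powR1; apply.
    by rewrite nnegrE.
  by rewrite nnegrE ltW.
have Bpe : forall e, Bp n p e = c ^+ 2 / (1 + e * (c - 1)) ^+ 2 - 1.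
  by move=> e; rewrite /Bp Dc subrK.
split; last first.
  split.
    move=> a b a0 ab b1; rewrite !Bpe ltrD2r.
    have qa : 1 <= 1 + a * (c - 1) by nra.
    have qb : 1 + a * (c - 1) < 1 + b * (c - 1) by nra.
    rewrite ltr_pM2l ?exprn_gt0 //; last lra.
    rewrite ltf_pV2 ?posrE ?exprn_gt0 //; try lra.
    nra.
  split. rewrite Bpe Dc mul0r addr0 expr1n divr1. congr (_ - _); congr (_ ^+ 2); lra.
  by rewrite Bpe mul1r (addrC 1 (c - 1)) subrK divff ?subrr // expf_neq0 // gt_eqF //; lra.
set S := \sum_(i < n) x i ^+ k.+2.
have S0 : 0 < S.
  rewrite lt0r sumr_ge0 ?andbT; last by move=> i _; rewrite exprn_ge0.
  apply/negP => /eqP /psumr_eq0P H.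
  have {H} H := H (fun j _ => exprn_ge0 _ (x0 j)).
  have : \sum_(i < n) x i = 0.
    by rewrite big1 // => i _; apply/eqP; move: (H i isT) => /eqP; rewrite expf_eq0 => /andP[_ ->].
  by rewrite sx; apply/eqP; rewrite oner_eq0.
set P := pnorm k.+2 x.
have PS : P ^+ k.+2 = S.
  rewrite /P /pnorm -powR_mulrn ?powR_ge0 // -powRrM mulVf ?powRr1 //; first exact: ltW.
  by rewrite gt_eqF.
have cp : c ^+ k.+2 = N ^+ k.+1.
  rewrite /c -powR_mulrn ?powR_ge0 // -powRrM mulrBl mul1r mulVf ?gt_eqF //.
  by rewrite -powR_mulrn ?(ltW N0) // -natr1 addrK.
have P0 : 0 < P by rewrite /P /pnorm powR_gt0.
set M := c * P / N.
have M0 : 0 < M by rewrite /M divr_gt0 // mulr_gt0 //; lra.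
have MS : M ^+ k.+2 = S / N.
  rewrite /M expr_div_n exprMn cp PS (exprS N k.+1).
  have u0 : N ^+ k.+1 != 0 by rewrite expf_neq0 // gt_eqF.
  move: u0; set u := N ^+ k.+1 => u0.
  field; rewrite u0 gt_eqF //.
have H := @sumsq R n x M k M0 x0.
rewrite -/S MS in H.
have H2 : \sum_(i < n) x i ^+ 2 <= M ^+ 2 * N.
  apply: (le_trans H); rewrite le_eqVlt; apply/orP; left; apply/eqP; rewrite /N; field.
  apply/and3P; split; [exact: lt0r_neq0 N0 | exact: lt0r_neq0 S0 | by rewrite -(natrD R 2 k) pnatr_eq0].
have Qe : \sum_(i < n) (x i - N^-1) ^+ 2 = \sum_(i < n) x i ^+ 2 - N^-1.
  under eq_bigr => i _ do rewrite sqrrB -mulr_natr.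
  rewrite big_split /= sumrB -!mulr_suml sx sumr_const card_ord -/N.
  rewrite -mulr_natl; field; exact: lt0r_neq0.
have CVe : CV x ^+ 2 = N * \sum_(i < n) x i ^+ 2 - 1.
  rewrite /CV /= -/N Qe expr_div_n sqr_sqrtr; last first.
    rewrite mulr_ge0 ?invr_ge0 ?(ltW N0) // -Qe sumr_ge0 // => i _.
    exact: sqr_ge0.
  field; exact: lt0r_neq0.
rewrite CVe Bpe lerD2r.
have q1 : 1 <= 1 + eps * (c - 1) by nra.
rewrite Dc -/P in hY.
have H3 : N * \sum_(i < n) x i ^+ 2 <= N * (M ^+ 2 * N) by rewrite ler_wpM2l // ltW.
have e : N * (M ^+ 2 * N) = c ^+ 2 * P ^+ 2 by rewrite /M; field; exact: lt0r_neq0.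
apply: (le_trans H3); rewrite e.
move: q1 hY; set q := 1 + eps * (c - 1) => q1 hY.
rewrite ler_pdivlMr; last by rewrite exprn_gt0 //; lra.
have Pq0 : 0 <= P * q by rewrite mulr_ge0 //; lra.
have w1 : (P * q) ^+ 2 <= 1.
  rewrite expr2 -[1]mul1r; apply: ler_pM => //; by rewrite mulrC.

have c0 : 0 <= c ^+ 2 by rewrite sqr_ge0.
rewrite -mulrA -exprMn; nra.

Qed.
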